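(* Let $f$ be an automorphism of a finite connected (marked) graph $\Gamma$ such that $\langle f\rangle$ acts freely on $\Gamma$ with a single orbit of vertices. Suppose $s$ and $t$ are edges lying in distinct $\langle f\rangle$-orbits and forming a coherently oriented path of length $2$, meeting at $v=\tau(s)=\iota(t)$. Then there is an $\langle f\rangle$-equivariant Whitehead move (an equivariant expansion followed by an equivariant collapse) sliding $s$ along $t$: after the move and relabelling, the graph and the action are unchanged except that now $\tau(s)=\tau(t)$, and correspondingly $\tau(f^i(s))=\tau(f^i(t))$ for all $i$.
   Context: For an oriented edge $e$, $\iota(e)$ is its initial vertex and $\tau(e)$ its terminal vertex. An equivariant expansion replaces vertices by an $\langle f\rangle$-invariant forest (blow-up), and an equivariant collapse contracts an $\langle f\rangle$-invariant forest; both produce a new marked graph with an automorphism realising the same element of $\mathrm{Out}(F_n)$. *)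

(* Defs.v *)
From mathcomp Require Import all_boot.
Set Warnings "-notation-overridden".
Set Implicit Arguments. Unset Strict Implicit. Unset Printing Implicit Defensive.

(* A finite graph: finite vertex set V, finite set E of oriented edges,
   fixed-point-free involution erev (e |-> bar e), initial vertex org = iota. *)
Record graph := Graph {
  V : finType;
  E : finType;
  erev : E -> E;
  org : E -> V;
  rev_invol : involutive erev;
  rev_nofix : forall e, erev e != e
}.

Definition ter (G : graph) (e : E G) : V G := org (erev e).

Definition adj (G : graph) : rel (V G) :=
  fun u w => [exists e : E G, (org e == u) && (ter e == w)].
Definition connected_graph (G : graph) : Prop :=
  forall u w : V G, connect (@adj G) u w.

Record gaut (G : graph) := GAut {
  fV : V G -> V G;
  fE : E G -> E G;
  fV_bij : bijective fV;
  fE_bij : bijective fE;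
  fE_rev : forall e, fE (erev e) = erev (fE e);
  fE_org : forall e, org (fE e) = fV (org e)
}.

(* <f> acts freely on (the realisation of) G: no nontrivial power fixes a
   vertex, and no power inverts an edge (a power fixing an edge fixes a vertex). *)
Definition acts_freely (G : graph) (f : gaut G) : Prop :=
  (forall (k : nat) (x : V G), iter k (fV f) x = x ->
      (forall y, iter k (fV f) y = y) /\ (forall e, iter k (fE f) e = e)) /\
  (forall (k : nat) (e : E G), iter k (fE f) e <> erev e).

Definition single_vertex_orbit (G : graph) (f : gaut G) : Prop :=
  forall u w : V G, exists k : nat, iter k (fV f) u = w.

Definition reduced_step (G : graph) : rel (E G) :=
  fun e1 e2 => (ter e1 == org e2) && (e2 != erev e1).
Definition forest (G : graph) (F : {set E G}) : Prop :=
  (forall e, (e \in F) = (erev e \in F)) /\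
  (forall c : seq (E G), c != [::] -> all (mem F) c -> ~~ cycle (@reduced_step G) c).

Definition Fadj (G : graph) (F : {set E G}) : rel (V G) :=
  fun u w => [exists e in F, (org e == u) && (ter e == w)].

(* equivariant collapse: (G, f) is obtained from (G', f') by collapsing the
   f'-invariant forest F, via the quotient maps pV (vertices) and pE (edges,
   meaningful on edges outside F).  Read in the other direction, (G', f') is an
   equivariant expansion (blow-up) of (G, f). *)
Definition eq_collapse (G' : graph) (f' : gaut G') (F : {set E G'})
    (G : graph) (f : gaut G) (pV : V G' -> V G) (pE : E G' -> E G) : Prop :=
  forest F /\
  (forall e, (e \in F) = (fE f' e \in F)) /\
  (forall u w, pV u = pV w <-> connect (Fadj F) u w) /\
  (forall x, exists u, pV u = x) /\
  {in [predC F] &, injective pE} /\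
  (forall e, exists2 e', e' \notin F & pE e' = e) /\
  (forall e', e' \notin F ->
      [/\ pE (erev e') = erev (pE e'), org (pE e') = pV (org e')
        & pE (fE f' e') = fE f (pE e')]) /\
  (forall u, pV (fV f' u) = fV f (pV u)).

(* Main.v *)
Require Import Defs.
From mathcomp Require Import all_boot.
Set Warnings "-notation-overridden".
Set Implicit Arguments. Unset Strict Implicit. Unset Printing Implicit Defensive.

Definition orb (G : graph) (f : gaut G) (e0 e : E G) := fconnect (fE f) e0 e.

Lemma fE_inj (G : graph) (f : gaut G) : injective (fE f).
Proof. exact: bij_inj (fE_bij f). Qed.
Lemma fV_inj (G : graph) (f : gaut G) : injective (fV f).
Proof. exact: bij_inj (fV_bij f). Qed.

Lemma orb_sym (G : graph) (f : gaut G) e1 e2 : orb f e1 e2 = orb f e2 e1.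
Proof. exact: (fconnect_sym (@fE_inj G f)). Qed.

Lemma orb_trans (G : graph) (f : gaut G) e1 e2 e3 :
  orb f e1 e2 -> orb f e2 e3 -> orb f e1 e3.
Proof. exact: connect_trans. Qed.

Lemma orb_iter (G : graph) (f : gaut G) e k : orb f e (iter k (fE f) e).
Proof. exact: fconnect_iter. Qed.

Lemma orbP (G : graph) (f : gaut G) e0 e :
  orb f e0 e -> exists k, iter k (fE f) e0 = e.
Proof. by move=> h; exists (findex (fE f) e0 e); apply: iter_findex. Qed.

Lemma orb_fE (G : graph) (f : gaut G) e0 e : orb f e0 (fE f e) = orb f e0 e.
Proof.
apply/idP/idP => h.
  apply: orb_trans h _; rewrite orb_sym; exact: fconnect1.
apply: orb_trans h _; exact: fconnect1.
Qed.

Lemma iter_org (G : graph) (f : gaut G) k e :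
  org (iter k (fE f) e) = iter k (fV f) (org e).
Proof. by elim: k => //= k IH; rewrite fE_org IH. Qed.

Lemma iter_rev (G : graph) (f : gaut G) k e :
  iter k (fE f) (erev e) = erev (iter k (fE f) e).
Proof. by elim: k => //= k IH; rewrite IH fE_rev. Qed.

Lemma iter_ter (G : graph) (f : gaut G) k e :
  ter (iter k (fE f) e) = iter k (fV f) (ter e).
Proof. by rewrite /ter -iter_rev iter_org. Qed.

Lemma orb_rev1 (G : graph) (f : gaut G) e1 e2 :
  orb f e1 e2 -> orb f (erev e1) (erev e2).
Proof. by case/orbP=> k <-; rewrite -iter_rev; apply: orb_iter. Qed.

Lemma orb_rev (G : graph) (f : gaut G) e1 e2 :
  orb f (erev e1) (erev e2) = orb f e1 e2.
Proof.
apply/idP/idP; last exact: orb_rev1.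
by move/orb_rev1; rewrite !rev_invol.
Qed.

Lemma free_uniq (G : graph) (f : gaut G) e1 e2 : acts_freely f ->
  orb f e1 e2 -> org e1 = org e2 -> e1 = e2.
Proof.
move=> [hf _] /orbP [k <-]; rewrite iter_org => /esym /hf [_ ->] //.
Qed.

Lemma free_norev (G : graph) (f : gaut G) e : acts_freely f ->
  ~~ orb f e (erev e).
Proof. by move=> [_ hf]; apply/negP => /orbP [k /hf]. Qed.

Lemma iter_comm (T : Type) (g : T -> T) a b x :
  iter a g (iter b g x) = iter b g (iter a g x).
Proof. by rewrite -!iterD addnC. Qed.

Definition Tt (G : graph) (f : gaut G) (t e : E G) := orb f t e.
Definition Sb (G : graph) (f : gaut G) (s e : E G) := orb f s (erev e).

Definition V1 (G : graph) : finType := (V G + V G)%type.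
Definition E1 (G : graph) : finType := (E G + (V G * bool))%type.
Definition rev1 (G : graph) (x : E1 G) : E1 G :=
  match x with inl e => inl (erev e) | inr (v, b) => inr (v, ~~ b) end.
Definition org1 (G : graph) (f : gaut G) (s t : E G) (x : E1 G) : V1 G :=
  match x with
  | inl e => if Tt f t e || Sb f s e then inr (org e) else inl (org e)
  | inr (v, b) => if b then inr v else inl v end.

Lemma rev1_invol (G : graph) : involutive (@rev1 G).
Proof. by case=> [e|[v b]] /=; rewrite ?rev_invol ?negbK. Qed.
Lemma rev1_nofix (G : graph) (x : E1 G) : rev1 x != x.
Proof.
case: x => [e|[v b]] /=.
  by apply/negP => /eqP [] /eqP; apply/negP; apply: rev_nofix.
by apply/negP => /eqP [] /eqP; case: b.
Qed.

Definition G1 (G : graph) (f : gaut G) (s t : E G) : graph :=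
  @Graph (V1 G) (E1 G) (@rev1 G) (org1 f s t) (@rev1_invol G) (@rev1_nofix G).

Definition fV1 (G : graph) (f : gaut G) (x : V1 G) : V1 G :=
  match x with inl v => inl (fV f v) | inr v => inr (fV f v) end.
Definition fE1 (G : graph) (f : gaut G) (x : E1 G) : E1 G :=
  match x with inl e => inl (fE f e) | inr (v, b) => inr (fV f v, b) end.

Lemma fV1_bij (G : graph) (f : gaut G) : bijective (fV1 f).
Proof.
apply: injF_bij => [[x|x] [y|y]] //= [] /fV_inj -> //.
Qed.
Lemma fE1_bij (G : graph) (f : gaut G) : bijective (fE1 f).
Proof.
apply: injF_bij => [[x|[x b]] [y|[y c]]] //= [] //.
  by move=> /fE_inj ->.
by move=> /fV_inj -> ->.
Qed.

Lemma Tt_fE (G : graph) (f : gaut G) t e : Tt f t (fE f e) = Tt f t e.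
Proof. exact: orb_fE. Qed.
Lemma Sb_fE (G : graph) (f : gaut G) s e : Sb f s (fE f e) = Sb f s e.
Proof. by rewrite /Sb -fE_rev orb_fE. Qed.

Lemma fE1_rev (G : graph) (f : gaut G) s t (e : E (G1 f s t)) :
  fE1 f (erev e) = erev (fE1 f e : E (G1 f s t)).
Proof. by case: e => [e|[v b]] //=; rewrite fE_rev. Qed.

Lemma fE1_org (G : graph) (f : gaut G) s t (e : E (G1 f s t)) :
  org (fE1 f e : E (G1 f s t)) = fV1 f (org e).
Proof.
case: e => [e|[v b]] /=; last by case: b.
by rewrite Tt_fE Sb_fE fE_org; case: ifP.
Qed.

Definition f1 (G : graph) (f : gaut G) s t : gaut (G1 f s t) :=
  @GAut (G1 f s t) (fV1 f) (fE1 f) (fV1_bij f) (fE1_bij f)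
    (@fE1_rev G f s t) (@fE1_org G f s t).

Definition org2 (G : graph) (f : gaut G) (s : E G) (m : nat) (e : E G) : V G :=
  if Sb f s e then iter m (fV f) (org e) else org e.

Definition G2 (G : graph) (f : gaut G) s m : graph :=
  @Graph (V G) (E G) (@erev G) (org2 f s m) (@rev_invol G) (@rev_nofix G).

Lemma f2_org (G : graph) (f : gaut G) s m (e : E (G2 f s m)) :
  org (fE f e : E (G2 f s m)) = fV f (org e).
Proof.
change (org2 f s m (fE f e) = fV f (org2 f s m e)).
rewrite /org2 Sb_fE fE_org; case: ifP => // _.
by rewrite -iterSr.
Qed.

Definition f2 (G : graph) (f : gaut G) s m : gaut (G2 f s m) :=
  @GAut (G2 f s m) (fV f) (fE f) (fV_bij f) (fE_bij f) (@fE_rev G f) (@f2_org G f s m).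

Definition tx (G : graph) (f : gaut G) (t : E G) (x : V G) : E G :=
  iter (findex (fV f) (org t) x) (fE f) t.

Definition p1V (G : graph) (x : V1 G) : V G := match x with inl v => v | inr v => v end.
Definition p1E (G : graph) (s : E G) (x : E1 G) : E G :=
  match x with inl e => e | inr _ => s end.
Definition p2V (G : graph) (f : gaut G) m (x : V1 G) : V G :=
  match x with inl v => v | inr v => iter m (fV f) v end.
Definition p2E (G : graph) (f : gaut G) t (x : E1 G) : E G :=
  match x with inl e => e | inr (v, b) => if b then erev (tx f t v) else tx f t v end.

Definition isr (G : graph) (x : E1 G) := if x is inr _ then true else false.
Definition inF2 (G : graph) (f : gaut G) t (x : E1 G) :=
  if x is inl e then Tt f t e || Tt f t (erev e) else false.

Lemma no_cycle (H : graph) (F : {set E H}) (Q : pred (E H)) :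
 (forall a b, a \in F -> b \in F -> reduced_step a b -> Q a && ~~ Q b) ->
 forall c, c != [::] -> all (mem F) c -> ~~ cycle (@reduced_step H) c.
Proof.
move=> hQ [//|x p] _ hall; apply/negP => hc.
have hx : x \in x :: p by rewrite inE eqxx.
have hy : next (x :: p) x \in x :: p by rewrite mem_next.
have h1 := next_cycle hc hx. have h2 := next_cycle hc hy.
have inF z : z \in x :: p -> z \in F by move=> hz; apply: (allP hall).
have hz : next (x :: p) (next (x :: p) x) \in x :: p by rewrite mem_next.
move: (hQ _ _ (inF _ hx) (inF _ hy) h1) (hQ _ _ (inF _ hy) (inF _ hz) h2).
by case/andP => _ /negbTE -> .
Qed.

Lemma Fadj_sym (H : graph) (F : {set E H}) :
  (forall e, (e \in F) = (erev e \in F)) -> symmetric (Fadj F).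
Proof.
move=> hF.
have h u w : Fadj F u w -> Fadj F w u.
  case/existsP => e /andP [eF /andP [/eqP ou /eqP tw]].
  apply/existsP; exists (erev e); by rewrite -hF eF -ou -tw /ter rev_invol !eqxx.

by move=> u w; apply/idP/idP => /h.
Qed.

Lemma collapse_conn (H : graph) (F : {set E H}) (T : eqType) (p : V H -> T)
  (g : T -> V H) :
 (forall e, (e \in F) = (erev e \in F)) ->
 (forall e, e \in F -> p (org e) = p (ter e)) ->
 (forall u, connect (Fadj F) u (g (p u))) ->
 forall u w, p u = p w <-> connect (Fadj F) u w.
Proof.
move=> hF hp hg.
have sym : connect_sym (Fadj F) by apply: sym_connect_sym; apply: Fadj_sym.
move=> u w; split.
  move=> puw; apply: connect_trans (hg u) _; rewrite puw sym; exact: hg.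
case/connectP => q; elim: q u => [|x q IH] u /=; first by move=> _ ->.
case/andP => /existsP [e /andP [eF /andP [/eqP ou /eqP tx]]] pq wl.
by rewrite -(IH x pq wl) -ou -tx hp.
Qed.

Lemma tx_Tt (G : graph) (f : gaut G) t x : Tt f t (tx f t x).
Proof. exact: orb_iter. Qed.

Lemma tx_org (G : graph) (f : gaut G) t x : single_vertex_orbit f ->
  org (tx f t x) = x.
Proof.
move=> hsv; rewrite /tx iter_org; apply: iter_findex.
by have [k <-] := hsv (org t) x; apply: fconnect_iter.
Qed.

Lemma Tt_uniq (G : graph) (f : gaut G) t e1 e2 : acts_freely f ->
  Tt f t e1 -> Tt f t e2 -> org e1 = org e2 -> e1 = e2.
Proof.
move=> hf; rewrite /Tt => h1 h2; apply: (free_uniq hf).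
by apply: (orb_trans (e2 := t)) h2; rewrite orb_sym.
Qed.

Lemma tx_eq (G : graph) (f : gaut G) t e : acts_freely f -> single_vertex_orbit f ->
  Tt f t e -> tx f t (org e) = e.
Proof.
move=> hf hsv he; exact: (Tt_uniq hf (tx_Tt f t (org e)) he (tx_org t (org e) hsv)).
Qed.

Lemma Tt_ter (G : graph) (f : gaut G) t m e : iter m (fV f) (org t) = ter t ->
  Tt f t e -> ter e = iter m (fV f) (org e).
Proof.
move=> hm /orbP [k <-]; rewrite iter_ter iter_org -hm; exact: iter_comm.
Qed.

Lemma Tt_Sb (G : graph) (f : gaut G) s t e : ~~ orb f s (erev t) ->
  Tt f t e -> ~~ Sb f s e.
Proof.
move=> hst he; apply/negP => hs; move/negP: hst; apply.
apply: orb_trans hs _; rewrite orb_sym orb_rev; exact: he.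
Qed.

Lemma Tt_Sbrev (G : graph) (f : gaut G) s t e : ~~ orb f s t ->
  Tt f t e -> ~~ Sb f s (erev e).
Proof.
move=> hst he; apply/negP; rewrite /Sb rev_invol => hs; move/negP: hst; apply.
apply: orb_trans hs _; rewrite orb_sym; exact: he.
Qed.

Lemma Tt_rev (G : graph) (f : gaut G) t e : acts_freely f ->
  Tt f t e -> ~~ Tt f t (erev e).
Proof.
move=> hf he; apply/negP => hr; move/negP: (free_norev e hf); apply.
apply: orb_trans hr; rewrite orb_sym; exact: he.
Qed.

Lemma Ttrev_Sb (G : graph) (f : gaut G) s t e : ~~ orb f s t ->
  Tt f t (erev e) -> ~~ Sb f s e.
Proof. by move=> hst he; have := Tt_Sbrev hst he; rewrite /Sb rev_invol. Qed.

Lemma collapse1 (G : graph) (f : gaut G) s t :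
  eq_collapse (f1 f s t) [set x : E (G1 f s t) | isr x] f (@p1V G) (p1E s).
Proof.
have hF : forall e : E (G1 f s t),
    (e \in [set x : E (G1 f s t) | isr x]) = (erev e \in [set x | isr x]).
  by case=> [e|[v b]]; rewrite !inE.
split; [split => //|split; [|split; [|split; [|split; [|split; [|split]]]]]].
- apply: (@no_cycle _ _ pred0); move=> a0 b0.
  case: a0 => [e|[v b]]; case: b0 => [e'|[w c]]; rewrite !inE //= => _ _.
  rewrite /reduced_step /ter /=.
  case: b; case: c => //= /andP [/eqP [<-]]; by rewrite eqxx.
- by case=> [e|[v b]]; rewrite !inE.
- apply: (@collapse_conn (G1 f s t) _ (V G) (@p1V G) (fun x => inl x)) => //.
    by case=> [e|[v b]]; rewrite inE //= /ter /=; case: b.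
  case=> [v|v] /=; first exact: connect0.
  apply: connect1; apply/existsP; exists (inr (v, true)).
  by rewrite inE /= /ter /= !eqxx.
- by move=> x; exists (inl x).
- by case=> [x|x] [y|y]; rewrite !inE //= => _ _ ->.
- by move=> e; exists (inl e); rewrite ?inE.
- case=> [e|[v b]]; rewrite inE //= => _; split => //.
  by case: ifP.
- by case.
Qed.

Lemma org1E (G : graph) (f : gaut G) s t e : org (inl e : E (G1 f s t)) =
  if Tt f t e || Sb f s e then inr (org e) else inl (org e).
Proof. by []. Qed.
Lemma ter1E (G : graph) (f : gaut G) s t e : ter (inl e : E (G1 f s t)) =
  org (inl (erev e) : E (G1 f s t)).
Proof. by []. Qed.

Lemma tx_fE (G : graph) (f : gaut G) t v : acts_freely f -> single_vertex_orbit f ->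
  tx f t (fV f v) = fE f (tx f t v).
Proof.
move=> hf hsv; apply: (Tt_uniq hf (tx_Tt f t _)).
  by rewrite /Tt orb_fE; apply: tx_Tt.
by rewrite fE_org !tx_org.
Qed.

Lemma collapse2 (G : graph) (f : gaut G) s t m :
  acts_freely f -> single_vertex_orbit f -> ~~ orb f s t -> ~~ orb f s (erev t) ->
  iter m (fV f) (org t) = ter t ->
  eq_collapse (f1 f s t) [set x : E (G1 f s t) | inF2 f t x] (f2 f s m)
     (p2V f m) (p2E f t).
Proof.
move=> hf hsv hst1 hst2 hm.
have hF : forall e : E (G1 f s t),
    (e \in [set x : E (G1 f s t) | inF2 f t x]) = (erev e \in [set x | inF2 f t x]).
  by case=> [e|[v b]]; rewrite !inE //= rev_invol orbC.
split; [split => //|split; [|split; [|split; [|split; [|split; [|split]]]]]].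
- apply: (@no_cycle _ _ (fun x : E (G1 f s t) => if x is inl e then Tt f t e else false)).
  move=> a0 b0.
  case: a0 => [e|[v b]]; case: b0 => [e'|[w c]]; rewrite !inE //= => ha hb.
  move/andP => [/eqP heq hne]; rewrite ter1E !org1E in heq.
  case: (boolP (Tt f t e)) => he.
    rewrite (negbTE (Tt_rev hf he)) (negbTE (Tt_Sbrev hst1 he)) /= in heq.
    rewrite /=; apply/negP => he'; by rewrite he' in heq.
  rewrite (negbTE he) /= in ha; rewrite ha /= in heq.
  case: (boolP (Tt f t e')) => he'.
    rewrite he' /= in heq; case: heq => heq.
    have := Tt_uniq hf ha he' heq => eq1.
    by rewrite -eq1 /= eqxx in hne.
  rewrite (negbTE he') /= in hb.
  by rewrite (negbTE he') (negbTE (Ttrev_Sb hst1 hb)) in heq.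
- case=> [e|[v b]]; rewrite !inE //= /Tt -fE_rev !orb_fE //.
- apply: (@collapse_conn (G1 f s t) _ (V G) (p2V f m) (fun x => inl x)) => //.
    case=> [e|[v b]]; rewrite inE //= => ha.
    case: (boolP (Tt f t e)) => he.
      rewrite (negbTE (Tt_rev hf he)) (negbTE (Tt_Sbrev hst1 he)) /=.
      by rewrite -(Tt_ter hm he).
    rewrite (negbTE he) /= in ha.
    rewrite (negbTE (Ttrev_Sb hst1 ha)) ha /=.
    by rewrite -(Tt_ter hm ha) /ter rev_invol.
  case=> [v|v] /=; first exact: connect0.
  apply: connect1; apply/existsP; exists (inl (tx f t v)).
  have ht := tx_Tt f t v.
  rewrite inE /= ht /= (negbTE (Tt_rev hf ht)).
  rewrite (negbTE (Tt_Sbrev hst1 ht)) /= tx_org //.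
  by rewrite -/(ter _) (Tt_ter hm ht) tx_org // !eqxx.
- by move=> x; exists (inl x).
- move=> [x|[x b]] [y|[y c]]; rewrite !inE /= => hx hy //=.
  + by move=> ->.
  + have ht := tx_Tt f t y.
    case: c => heq; move: hx; rewrite heq.
      by rewrite rev_invol ht orbT.
    by rewrite ht.
  + have ht := tx_Tt f t x.
    case: b => heq; move: hy; rewrite -heq.
      by rewrite rev_invol ht orbT.
    by rewrite ht.
  + case: b; case: c.
    * move/(can_inj (@rev_invol G)) => h.
      by rewrite -(tx_org t x hsv) h tx_org.
    * move=> h; have := Tt_rev hf (tx_Tt f t x); by rewrite h tx_Tt.
    * move=> h; have := Tt_rev hf (tx_Tt f t y); by rewrite -h tx_Tt.
    * move=> h.
      by rewrite -(tx_org t x hsv) h tx_org.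
- move=> e; case: (boolP (Tt f t e)) => he.
    exists (inr (@org G e, false)); rewrite ?inE //=.
    exact: tx_eq.
  case: (boolP (Tt f t (erev e))) => he'.
    exists (inr (@org G (erev e), true)); rewrite ?inE //=.
    by rewrite tx_eq // rev_invol.
  by exists (inl e); rewrite // inE /= negb_or he he'.
- case=> [e|[v b]]; rewrite inE /= => hnF.
  + split => //.
    change (org2 f s m e = p2V f m (org (inl e : E (G1 f s t)))).
    rewrite org1E /org2; move: hnF; rewrite negb_or => /andP [h1 h2].
    by rewrite (negbTE h1) /=; case: (Sb f s e).
  + have ht := tx_Tt f t v.
    split.
    * by case: b => //=; rewrite rev_invol.
    * case: b.
        change (org2 f s m (erev (tx f t v)) = iter m (fV f) v).
        rewrite /org2 (negbTE (Tt_Sbrev hst1 ht)) -/(ter _).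
        by rewrite (Tt_ter hm ht) tx_org.
      change (org2 f s m (tx f t v) = v).
      by rewrite /org2 (negbTE (Tt_Sb hst2 ht)) tx_org.
    * by case: b => /=; rewrite tx_fE // fE_rev.
- by case=> [v|v] //=; rewrite -iterSr.
Qed.

Theorem lemma6p4 (G : graph) (f : gaut G) (s t : E G) :
  connected_graph G ->
  acts_freely f ->
  single_vertex_orbit f ->
  (forall i : nat, iter i (fE f) s <> t /\ iter i (fE f) s <> erev t) ->
  ter s = org t ->
  exists (G' : graph) (f' : gaut G') (F1 F2 : {set E G'})
         (G'' : graph) (f'' : gaut G'')
         (p1V : V G' -> V G) (p1E : E G' -> E G)
         (p2V : V G' -> V G'') (p2E : E G' -> E G'')
         (phiV : V G'' -> V G) (phiE : E G'' -> E G),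
    eq_collapse f' F1 f p1V p1E /\
    eq_collapse f' F2 f'' p2V p2E /\
    bijective phiV /\ bijective phiE /\
    (forall x, phiE (erev x) = erev (phiE x)) /\
    (forall x, phiV (fV f'' x) = fV f (phiV x)) /\
    (forall x, phiE (fE f'' x) = fE f (phiE x)) /\
    (forall (x : E G'') (i : nat), phiE x = erev (iter i (fE f) s) ->
        phiV (org x) = ter (iter i (fE f) t)) /\
    (forall x : E G'', (forall i : nat, phiE x <> erev (iter i (fE f) s)) ->
        phiV (org x) = org (phiE x)) /\
    (forall (e' : E G') (e : E G), e' \notin F1 -> p1E e' = e ->
        (forall i : nat, e <> iter i (fE f) t /\ e <> erev (iter i (fE f) t)) ->
        e' \notin F2 /\ phiE (p2E e') = e).
Proof.
move=> _ hf hsv hst hvt.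
have [m hm] := hsv (org t) (ter t).
have hst1 : ~~ orb f s t by apply/negP => /orbP [k hk]; exact: (hst k).1 hk.
have hst2 : ~~ orb f s (erev t) by apply/negP => /orbP [k hk]; exact: (hst k).2 hk.
exists (G1 f s t), (f1 f s t), [set x : E (G1 f s t) | isr x],
  [set x : E (G1 f s t) | inF2 f t x], (G2 f s m), (f2 f s m),
  (@p1V G), (p1E s), (p2V f m), (p2E f t), (@id (V G)), (@id (E G)).
split; first exact: collapse1.
split; first exact: collapse2.
split; first by exists id.
split; first by exists id.
split; first by [].
split; first by [].
split; first by [].
split.
  move=> x i /= ->.
  change (org2 f s m (erev (iter i (fE f) s)) = ter (iter i (fE f) t)).
  rewrite /org2 /Sb rev_invol orb_iter.
  by rewrite -/(ter _) !iter_ter hvt -hm iter_comm.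
split.
  move=> x hx /=.
  rewrite /org2.
  case: ifP => // /orbP [k hk]; exfalso; apply: (hx k).
  by rewrite hk rev_invol.
case=> [e0|[v b]] e; rewrite inE //= => _ <- h; split => //.
rewrite inE /= negb_or; apply/andP; split; apply/negP => /orbP [k hk].
  by case: (h k) => /(_ (esym hk)).
by case: (h k) => _; apply; rewrite hk rev_invol.
Qed.
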